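(* Under the setup in the context, for every $\delta>0$, the event $$\mathcal E=\bigcup_{j=1}^{K}\bigcup_{i=1}^{\infty}\bigl\{|\tilde\mu_{j,i}-\mu_j|>U(i,\delta)\bigr\}$$ satisfies $\mathbb P(\mathcal E)\le\delta$.
   Context: There are $K$ arms. For each arm $j\in[K]=\{1,\dots,K\}$, the rewards $r_{j,1},r_{j,2},\dots$ are i.i.d. real random variables with values in a fixed interval $[a,b]$ and mean $\mu_j$, and they are $\sigma^2$-subgaussian in the sense that $\mathbb P(|r_{j,k}-\mu_j|>t)\le 2e^{-t^2/(2\sigma^2)}$ for all $t>0$; moreover empirical means satisfy $\mathbb P(|\frac1n\sum_{k=1}^n r_{j,k}-\mu_j|>t)\le 2e^{-nt^2/(2\sigma^2)}$ for all $n\ge1,t>0$. Rewards of different arms are independent. Fix integers $B\ge 1$ and $\alpha\ge 2$, and set $t_i=\alpha^i$ for $i\ge1$. For $\delta>0$ and $i\ge 1$ define $$U'(i,\delta)=\sigma\sqrt{\frac{2\log(4Kt_i^2/\delta)}{t_i}},$$ and define $U(i,\delta)$ recursively by $U(0,\delta)=b-a$ and $$U(i,\delta)=\frac{1}{2^B}\bigl[U'(i,\delta)+U(i-1,\delta)\bigr]+U'(i,\delta)\quad(i\ge1).$$ Let $\hat\mu_{j,i}=\frac1{t_i}\sum_{k=1}^{t_i}r_{j,k}$. Quantizer: for a real interval $[\ell,u]$, divide it into $2^B$ consecutive bins of equal width $(u-\ell)/2^B$; for any $x\in\mathbb R$, $Q_{[\ell,u]}(x)$ denotes the midpoint of a bin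 whose midpoint is nearest to $x$. Decoded estimates: $\tilde\mu_{j,0}$ is drawn uniformly from $[a,b]$, and for $i\ge1$, $$\tilde\mu_{j,i}=Q_{I_{j,i}}(\hat\mu_{j,i}),\qquad I_{j,i}=\bigl[\tilde\mu_{j,i-1}-U(i-1,\delta)-U'(i,\delta),\ \tilde\mu_{j,i-1}+U(i-1,\delta)+U'(i,\delta)\bigr].$$ *)

(* Defs.v *)
From HB Require Import structures.
From mathcomp Require Import all_boot all_order all_algebra.
From mathcomp Require Import all_classical all_reals all_analysis.
Set Implicit Arguments. Unset Strict Implicit. Unset Printing Implicit Defensive.
Import Order.TTheory GRing.Theory Num.Theory.
Import numFieldNormedType.Exports.
Local Open Scope classical_set_scope.
Local Open Scope ring_scope.

Definition mutually_independent d (T : measurableType d) (R : realType)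
    (P : probability T R) (I : eqType) (X : I -> {RV P >-> R}) : Prop :=
  forall (J : seq I) (B : I -> set R), uniq J ->
    (forall i, i \in J -> measurable (B i)) ->
    P (\big[setI/setT]_(i <- J) (X i @^-1` B i)) =
    (\big[*%E/1%E]_(i <- J) P (X i @^-1` B i))%E.

Definition tt (R : realType) (alpha i : nat) : R := (alpha ^ i)%:R.

Definition Uprime (R : realType) (K alpha : nat) (sigma : R) (i : nat) (delta : R) : R :=
  sigma * Num.sqrt (2 * ln (4 * K%:R * (tt R alpha i) ^+ 2 / delta) / tt R alpha i).

Fixpoint Ubound (R : realType) (K alpha B : nat) (sigma a b : R) (i : nat) (delta : R) : R :=
  match i with
  | 0 => b - a
  | i'.+1 => (2 ^+ B)^-1 * (Uprime K alpha sigma i'.+1 delta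
                             + Ubound K alpha B sigma a b i' delta)
             + Uprime K alpha sigma i'.+1 delta
  end.

Definition bin_mid (R : realType) (B : nat) (l u : R) (k : nat) : R :=
  l + (k%:R + 2^-1) * ((u - l) / 2 ^+ B).

(* y is a value of the quantizer Q_[l,u](x): y is the midpoint of a bin of [l,u]
   whose midpoint is nearest to x (any tie-breaking is allowed). *)
Definition is_quantization (R : realType) (B : nat) (l u x y : R) : Prop :=
  exists k : 'I_(2 ^ B), y = bin_mid B l u k /\
    forall k' : 'I_(2 ^ B), `|x - bin_mid B l u k| <= `|x - bin_mid B l u k'|.

(* Main.v *)
Require Import Defs.
Set Warnings "-notation-overridden,-ambiguous-paths,-deprecated".

From HB Require Import structures.
From mathcomp Require Import all_boot all_order all_algebra.
From mathcomp Require Import all_classical all_reals all_analysis.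
From mathcomp Require Import ring lra.
Set Warnings "-notation-overridden,-ambiguous-paths".

Import Order.TTheory GRing.Theory Num.Theory.
Import numFieldNormedType.Exports.
Local Open Scope classical_set_scope.
Local Open Scope ring_scope.

Lemma near_bin (R : realType) (B : nat) (l u x : R) : l <= x <= u ->
  exists k : 'I_(2 ^ B), `|x - bin_mid B l u k| <= (u - l) / 2 / 2 ^+ B.
Proof.
move=> /andP[lx xu].
have N0 : (0 < 2 ^ B)%N by rewrite expn_gt0.
have p0 : (0 : R) < 2 ^+ B by rewrite exprn_gt0.
set w := (u - l) / 2 ^+ B.
have w0 : 0 <= w by rewrite divr_ge0 ?subr_ge0 ?(le_trans lx) // ltW.
have E : (u - l) / 2 / 2 ^+ B = w / 2 by rewrite /w; field; rewrite gt_eqF.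
rewrite E.
have [wz|wp] := eqVneq w 0.
  have ul : u = l.
    by move/eqP: wz; rewrite /w mulf_eq0 invr_eq0 (gt_eqF p0) orbF subr_eq0 => /eqP.
  exists (Ordinal N0); rewrite /bin_mid -/w wz mulr0 addr0.
  have -> : x = l by apply/eqP; rewrite eq_le lx -ul xu.
  by rewrite subrr normr0 mul0r.
have wp' : 0 < w by rewrite lt_def wp w0.
pose q := (x - l) / w.
have q0 : 0 <= q by rewrite divr_ge0 // subr_ge0.
have qN : q <= (2 ^ B)%:R.
  rewrite /q ler_pdivrMr // /w natrX mulrCA mulfV ?gt_eqF // mulr1.
  by rewrite lerD2r.
pose n := Num.truncn q.
have [nq qn] := andP (truncn_itv q0).
pose k := minn n (2 ^ B).-1.
have kN : (k < 2 ^ B)%N by rewrite /k gtn_min ltn_predL N0 orbT.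
have kq1 : k%:R <= q <= k%:R + 1.
  have [h|h] := ltnP n (2 ^ B).
    have -> : k = n by apply/minn_idPl; rewrite -ltnS prednK.
    by rewrite nq natr1 ltW.
  have -> : k = (2 ^ B).-1 by apply/minn_idPr; rewrite (leq_trans (leq_pred _) h).
  have qe : q = (2 ^ B)%:R.
    by apply/eqP; rewrite eq_le qN (le_trans _ nq) // ler_nat.
  rewrite qe natr1 prednK // lexx andbT ler_nat.
  exact: leq_pred.
exists (Ordinal kN); rewrite /bin_mid -/w /=.
have -> : x - (l + (k%:R + 2^-1) * w) = (q - k%:R - 2^-1) * w.
  by rewrite /q; field; rewrite gt_eqF.
rewrite normrM (ger0_norm w0) mulrC ler_pM2l // .
case/andP: kq1 => h1 h2.
rewrite ler_norml; apply/andP; split; lra.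
Qed.

Lemma quant_step (R : realType) (B : nat) (m mu y h U Up : R) :
  0 <= U -> 0 <= Up -> `|m - mu| <= U -> `|h - mu| <= Up ->
  is_quantization B (m - U - Up) (m + U + Up) h y ->
  `|y - mu| <= (2 ^+ B)^-1 * (Up + U) + Up.
Proof.
move=> U0 Up0 hm hh [k [-> Hk]].
have lhu : m - U - Up <= h <= m + U + Up.
  move: hm hh; rewrite !ler_norml => /andP[? ?] /andP[? ?]; apply/andP; split; lra.
have [k0 Hk0] := @near_bin R B _ _ _ lhu.
have E : (m + U + Up - (m - U - Up)) / 2 / 2 ^+ B = (2 ^+ B)^-1 * (Up + U).
  by field; rewrite expf_neq0.
rewrite E in Hk0.
have H1 := le_trans (Hk k0) Hk0.
set M := bin_mid B (m - U - Up) (m + U + Up) k in H1 *.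
have -> : M - mu = (M - h) + (h - mu) by ring.
apply: (le_trans (ler_normD _ _)); rewrite distrC; exact: lerD.
Qed.

Lemma mean_in d (T : measurableType d) (R : realType) (P : probability T R)
  (X : {RV P >-> R}) (a b m : R) :
  (forall x, a <= X x <= b) -> ('E_P[X] = m%:E)%E -> a <= m <= b.
Proof.
move=> hX; rewrite expectation_def => hE.
have iX : P.-integrable setT (EFin \o X).
  apply: measurable_bounded_integrable => //.
    by apply: (le_lt_trans (probability_le1 P measurableT)); exact: ltry.
  rewrite /bounded_near; near=> M => x _ /=.
  have [h1 h2] := andP (hX x).
  apply: (@le_trans _ _ (`|a| + `|b|)).
    have ha := ler_norm (- a); rewrite normrN in ha.
    have hb := ler_norm b.
    rewrite ler_norml; apply/andP; split; have := normr_ge0 a; have := normr_ge0 b; lra.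
  near: M; exact: nbhs_pinfty_ge.
have ic (c : R) : P.-integrable setT (EFin \o cst c).
  exact: finite_measure_integrable_cst.
apply/andP; split; rewrite -lee_fin -hE.
- have -> : a%:E = (\int[P]_(x in setT) (EFin \o cst a) x)%E.
    have -> : EFin \o cst a = cst a%:E by [].
    by rewrite integral_cst //= probability_setT mule1.
  by apply: le_integral => // x _; rewrite lee_fin; case/andP: (hX x).
- have -> : b%:E = (\int[P]_(x in setT) (EFin \o cst b) x)%E.
    have -> : EFin \o cst b = cst b%:E by [].
    by rewrite integral_cst //= probability_setT mule1.
  by apply: le_integral => // x _; rewrite lee_fin; case/andP: (hX x).
Unshelve. all: end_near. Qed.

Lemma mset_lt d (T : measurableType d) (R : realType) (f : T -> R) (c : R) :
  measurable_fun setT f -> measurable [set x | c < f x].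
Proof.
move=> mf; have := measurable_realfun.measurable_fun_ltr (measurable_cst c) mf measurableT.
move=> /(_ [set true] I); rewrite setTI; exact.
Qed.

Lemma Up_ge0 (R : realType) K alpha (sigma : R) i delta : 0 < sigma ->
  0 <= Uprime K alpha sigma i delta.
Proof. by move=> s0; rewrite /Uprime (mulr_ge0 (ltW s0)) ?sqrtr_ge0. Qed.

Lemma U_ge0 (R : realType) K alpha B (sigma a b : R) i delta : 0 < sigma -> a < b ->
  0 <= Ubound K alpha B sigma a b i delta.
Proof.
move=> s0 ab; elim: i => [|i IH] /=; first by rewrite subr_ge0 ltW.
by rewrite addr_ge0 ?Up_ge0 // mulr_ge0 ?addr_ge0 ?Up_ge0 // invr_ge0 exprn_ge0.
Qed.

Lemma tail_num (R : realType) (K alpha : nat) (sigma delta : R) (n : nat) :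
  (0 < K)%N -> (2 <= alpha)%N -> 0 < sigma -> 0 < delta -> delta < 1 ->
  0 < Uprime K alpha sigma n.+1 delta /\
  K%:R * (2 * expR (- ((alpha ^ n.+1)%:R * Uprime K alpha sigma n.+1 delta ^+ 2)
                    / (2 * sigma ^+ 2))) <= delta / (2 ^ n.+1)%:R.
Proof.
move=> K0 a2 s0 d0 d1.
set t : R := (alpha ^ n.+1)%:R.
have t2 : (2 ^ n.+1)%:R <= t by rewrite /t ler_nat leq_exp2r.
have p2 : (1 : R) <= (2 ^ n.+1)%:R by rewrite (ler_nat R 1) expn_gt0.
have t1 : 1 <= t := le_trans p2 t2.
have K1 : (1 : R) <= K%:R by rewrite (ler_nat R 1).
set X := 4 * K%:R * t ^+ 2 / delta.
have X1 : 1 < X.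
  rewrite /X ltr_pdivlMr // mul1r.
  apply: (lt_le_trans d1); rewrite -mulrA.
  have : 1 <= t ^+ 2 by rewrite expr_ge1 // (le_trans _ t1).
  nra.
have lX := ln_gt0 X1.
have a0 : 0 < 2 * ln X / t by rewrite divr_gt0 ?mulr_gt0 // (lt_le_trans _ t1).
have UE : Uprime K alpha sigma n.+1 delta = sigma * Num.sqrt (2 * ln X / t) by [].
split; first by rewrite UE mulr_gt0 // sqrtr_gt0.
rewrite UE exprMn (sqr_sqrtr (ltW a0)).
have -> : - (t * (sigma ^+ 2 * (2 * ln X / t))) / (2 * sigma ^+ 2) = - ln X.
  field; rewrite ?gt_eqF // ?(lt_le_trans _ t1) // ?mulf_neq0 ?expf_neq0 ?gt_eqF //.
rewrite expRN lnK; last by rewrite posrE (lt_trans _ X1).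
rewrite /X invf_div.
have -> : K%:R * (2 * (delta / (4 * K%:R * t ^+ 2))) = delta / (2 * t ^+ 2).
  field; rewrite ?mulf_neq0 ?expf_neq0 ?gt_eqF // ?(lt_le_trans _ t1) // (lt_le_trans _ K1) //.
have tp : 0 < t by rewrite (lt_le_trans _ t1).
rewrite ler_pdivrMr ?mulr_gt0 ?exprn_gt0 // mulrAC ler_pdivlMr ?(lt_le_trans _ p2) //.
rewrite ler_pM2l //.
have : t <= t ^+ 2 by rewrite expr2 ler_peMr // (le_trans _ t1).
move=> h; nra.
Qed.

Lemma mset_dist d (T : measurableType d) (R : realType) (f : T -> R) (c m : R) :
  measurable_fun setT f -> measurable [set x | c < `|f x - m|].
Proof.
move=> mf; apply: (@mset_lt _ _ _ (fun x => `|f x - m|)).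
apply: (measurableT_comp (@measurable_realfun.normr_measurable R setT)).
exact: (measurable_realfun.measurable_funB mf (measurable_cst m)).
Qed.

Theorem lemma2 (d : measure_display) (T : measurableType d) (R : realType)
  (P : probability T R) (K B alpha : nat) (a b sigma : R) (ab : a < b)
  (mu : 'I_K -> R)
  (r : 'I_K -> nat -> {RV P >-> R})
  (mt : 'I_K -> nat -> {RV P >-> R})
  (delta : R) :
  (0 < K)%N -> (1 <= B)%N -> (2 <= alpha)%N -> 0 < sigma ->
  (* rewards take values in [a, b] *)
  (forall j k x, a <= r j k x <= b) ->
  (* mean mu_j *)
  (forall j k, ('E_P[r j k] = (mu j)%:E)%E) ->
  (* identically distributed within each arm *)
  (forall j k A, measurable A ->
     distribution P (r j k) A = distribution P (r j 0%N) A) ->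
  (* independence (within arms and across arms) *)
  mutually_independent (fun jk : 'I_K * nat => r jk.1 jk.2) ->
  (* sigma^2-subgaussian tails *)
  (forall j k (t : R), 0 < t ->
     (P [set x | (t < `|r j k x - mu j|)%R] <=
       (2 * expR (- (t ^+ 2) / (2 * sigma ^+ 2)))%R%:E)%E) ->
  (* concentration of empirical means *)
  (forall j n (t : R), (1 <= n)%N -> 0 < t ->
     (P [set x | (t < `|(n%:R)^-1 * (\sum_(k < n) r j k x) - mu j|)%R] <=
       (2 * expR (- (n%:R * t ^+ 2) / (2 * sigma ^+ 2)))%R%:E)%E) ->
  (* initial decoded estimate uniform on [a, b] *)
  (forall j A, measurable A ->
     distribution P (mt j 0%N) A = uniform_prob ab A) ->
  (* decoded estimates: mt j i = Q_{I_{j,i}}(hat mu_{j,i}) *)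
  (forall j i x, (1 <= i)%N ->
     is_quantization B
       (mt j i.-1 x - Ubound K alpha B sigma a b i.-1 delta - Uprime K alpha sigma i delta)
       (mt j i.-1 x + Ubound K alpha B sigma a b i.-1 delta + Uprime K alpha sigma i delta)
       ((tt R alpha i)^-1 * \sum_(k < alpha ^ i) r j k x)
       (mt j i x)) ->
  0 < delta ->
  (P [set x | exists (j : 'I_K) (i : nat), (1 <= i)%N /\
        (Ubound K alpha B sigma a b i delta < `|mt j i x - mu j|)%R ] <= delta%:E)%E.
Proof.
move=> K0 B1 a2 s0 rab Emu _ _ _ conc unif quant d0.
destruct K as [|K']; first by [].
pose hat (j : 'I_K'.+1) (i : nat) (x : T) :=
  (tt R alpha i)^-1 * \sum_(k < alpha ^ i) r j k x.
have mhat j i : measurable_fun setT (hat j i).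
  apply: (measurable_realfun.measurable_funM (measurable_cst _)).
  apply: measurable_sum => k; exact: measurable_funPT.
pose H (j : 'I_K'.+1) (n : nat) : set T :=
  (mt j 0%N) @^-1` (~` `[a, b]) `|`
  [set x | Uprime K'.+1 alpha sigma n.+1 delta < `|hat j n.+1 x - mu j|].
have mH j n : measurable (H j n).
  apply: measurableU; first exact/measurable_funPTI/measurableC.
  exact: mset_dist.
pose G (n : nat) : set T := \bigcup_(k in `I_K'.+1) H (inord k) n.
have mG n : measurable (G n).
  by rewrite /G bigcup_mkord; apply: bigsetU_measurable => k _.
set E := [set x | _].
have mE : measurable E.
  have -> : E = \bigcup_n \bigcup_(k in `I_K'.+1)
      [set x | Ubound K'.+1 alpha B sigma a b n.+1 delta <
               `|mt (inord k) n.+1 x - mu (inord k)|].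
    apply/seteqP; split => x.
      move=> [j [i [i1]]]; rewrite -(prednK i1) => hx.
      exists i.-1 => //; exists (val j); first exact: ltn_ord.
      rewrite inord_val; exact: hx.
    by move=> [n _ [k _ hx]]; exists (inord k), n.+1.
  apply: bigcupT_measurable => n; rewrite bigcup_mkord.
  apply: bigsetU_measurable => k _; exact: mset_dist.
have [d1|d1] := leP 1 delta.
  by apply: (le_trans (probability_le1 P mE)); rewrite lee_fin.
have sub : E `<=` \bigcup_n G n.
  move=> x [j [i [i1 hx]]].
  have [//|nG] := pselect ((\bigcup_n G n) x).
  exfalso.
  have nH j' n : ~ H j' n x.
    move=> Hx; apply: nG; exists n => //; exists (val j'); first exact: ltn_ord.
    by rewrite inord_val.
  have g0 j' : a <= mt j' 0%N x <= b.
    apply/negPn/negP => h; apply: (nH j' 0%N); left.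
    rewrite /preimage /setC /= in_itv /=; exact/negP.
  have g1 j' n : `|hat j' n.+1 x - mu j'| <= Uprime K'.+1 alpha sigma n.+1 delta.
    by rewrite leNgt; apply/negP => h; apply: (nH j' n); right.
  have key i' : `|mt j i' x - mu j| <= Ubound K'.+1 alpha B sigma a b i' delta.
    elim: i' => [|i' IH].
      have := @mean_in d T R P (r j 0%N) a b (mu j) (rab j 0%N) (Emu j 0%N).
      move=> /andP[m1 m2]; have /andP[x1 x2] := g0 j.
      rewrite /= ler_norml; apply/andP; split; lra.
    exact: (@quant_step R B _ _ _ _ _ _ (@U_ge0 R K'.+1 alpha B sigma a b i' delta s0 ab) (@Up_ge0 R K'.+1 alpha sigma i'.+1 delta s0)
              IH (g1 j i') (quant j i'.+1 x isT)).
  by move: hx; rewrite ltNge key.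
apply: (le_trans (measure_sigma_subadditive P mG mE sub)).
apply: le_trans (epsilon_trick0 xpredT (ltW d0)).
apply: lee_nneseries => [n _ _|n _]; first exact: measure_ge0.
have [Up0 hnum] := @tail_num R K'.+1 alpha sigma delta n K0 a2 s0 d0 d1.
have hs := @content_subadditive _ _ _ P (G n) (fun k => H (inord k) n) K'.+1
  (fun k _ => mH _ _) (mG n).
apply: le_trans (hs _) _; first by rewrite /G bigcup_mkord.
set c := 2 * expR (- ((alpha ^ n.+1)%:R * Uprime K'.+1 alpha sigma n.+1 delta ^+ 2)
                    / (2 * sigma ^+ 2)).
apply: (@le_trans _ _ (\sum_(k < K'.+1) c%:E)%E).
  apply: lee_sum => k _.
  have m1 : measurable (mt (inord k) 0%N @^-1` (~` `[a, b])).
    exact: (measurable_funPTI (mt (inord k) 0%N) (measurableC (measurable_itv _))).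
  have m2 : measurable [set x | Uprime K'.+1 alpha sigma n.+1 delta <
                               `|hat (inord k) n.+1 x - mu (inord k)|].
    exact: mset_dist.
  apply: le_trans (measureU2 P m1 m2) _.
  have h0 : (P (mt (inord k) 0%N @^-1` (~` `[a, b])) <= 0)%E.
    rewrite le_eqVlt; apply/orP; left; apply/eqP.
    transitivity (distribution P (mt (inord k) 0%N) (~` `[a, b])); first by [].
    rewrite (unif (inord k) _ (measurableC (measurable_itv `[a, b]))).
    by rewrite /uniform_prob integral_uniform_pdf setICl integral_set0.
  have N1 : (1 <= alpha ^ n.+1)%N by rewrite expn_gt0 (leq_trans _ a2).
  have h1 := conc (inord k) (alpha ^ n.+1)%N _ N1 Up0.
  apply: le_trans (leeD h0 h1) _.
  by rewrite add0e.
rewrite sumEFin lee_fin sumr_const card_ord -[c *+ _]mulr_natl.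
exact: hnum.
Qed.
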